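(* Let $G$ be a finite connected graph of diameter $2$. If $G$ is Bonnet–Myers sharp, then $G$ is isomorphic to the cocktail party graph $CP(m)$ for some $m\ge 2$. Conversely, every $CP(m)$ with $m\ge2$ is a Bonnet–Myers sharp graph of diameter $2$.
   Context: All graphs are finite, simple, connected and undirected, with the combinatorial shortest-path distance $d$. For $V=\{v_1,\dots,v_n\}$, $D=(d(v_i,v_j))_{i,j=1}^n$ is the distance matrix and $\mathbf{1}_n$ the all-ones column vector. When $DK=n\mathbf{1}_n$ has solutions, the Steinerberger curvature is a solution $K$ for which $\min_iK_i$ is maximal among all solutions. $G$ is Bonnet–Myers sharp if $DK=n\mathbf{1}_n$ has a solution and its Steinerberger curvature $K$ satisfies $\min_iK_i=2/\mathrm{diam}(G)$. The cocktail party graph $CP(m)$ is the complete graph $K_{2m}$ with the edges of a perfect matching removed. *)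

(* Defs.v *)
From mathcomp Require Import all_boot all_order all_algebra.
From mathcomp Require Import reals.
Set Implicit Arguments. Unset Strict Implicit. Unset Printing Implicit Defensive.
Import Order.TTheory GRing.Theory Num.Theory.

Definition simple_graph (T : finType) (e : rel T) : Prop :=
  symmetric e /\ irreflexive e.

Definition connected_graph (T : finType) (e : rel T) : Prop :=
  forall x y : T, connect e x y.

Fixpoint ball (T : finType) (e : rel T) (k : nat) (x : T) : {set T} :=
  match k with
  | 0 => [set x]
  | k'.+1 => ball e k' x :|: [set y | [exists z in ball e k' x, e z y]]
  end.

(* combinatorial shortest-path distance: least k with y in ball e k x
   (for a connected graph this is < #|T|) *)
Definition dist (T : finType) (e : rel T) (x y : T) : nat :=
  find (fun k => y \in ball e k x) (iota 0 #|T|).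

Definition diam (T : finType) (e : rel T) : nat :=
  \max_(x : T) \max_(y : T) dist e x y.

Definition curv_eq (R : realType) (T : finType) (e : rel T) (K : T -> R) : Prop :=
  forall i : T, (\sum_(j : T) (dist e i j)%:R * K j = (#|T|)%:R)%R.

Definition is_min_value (R : realType) (T : finType) (K : T -> R) (m : R) : Prop :=
  (exists i, K i = m) /\ (forall i, (m <= K i)%R).

Definition steinerberger_curvature (R : realType) (T : finType) (e : rel T)
    (K : T -> R) : Prop :=
  curv_eq e K /\
  forall K' : T -> R, curv_eq e K' ->
    forall m m' : R, is_min_value K m -> is_min_value K' m' -> (m' <= m)%R.

Definition bonnet_myers_sharp (R : realType) (T : finType) (e : rel T) : Prop :=
  (exists K : T -> R, curv_eq e K) /\
  exists K : T -> R, steinerberger_curvature e K /\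
    is_min_value K (2%:R / (diam e)%:R)%R.

(* Cocktail party graph CP(m): vertices (i, b), i < m, b : bool; it is K_{2m}
   minus the perfect matching {(i,false),(i,true)}. *)
Definition cp_rel (m : nat) : rel ('I_m * bool) :=
  fun u v => u.1 != v.1.
Arguments cp_rel m : clear implicits.

Definition graph_iso (T1 T2 : finType) (e1 : rel T1) (e2 : rel T2) : Prop :=
  exists f : T1 -> T2, bijective f /\ forall x y, e2 (f x) (f y) = e1 x y.

(* Main.v *)
Require Import Defs.
From mathcomp Require Import all_boot all_order all_algebra.
From mathcomp Require Import reals.
From mathcomp Require Import lra zify.
Set Implicit Arguments. Unset Strict Implicit. Unset Printing Implicit Defensive.
Import Order.TTheory GRing.Theory Num.Theory.

Section Aux.
Variables (T : finType) (e : rel T).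

Lemma ball1E x y : (y \in ball e 1 x) = (y == x) || e x y.
Proof.
rewrite /= !inE; congr orb; apply/existsP/idP => [[z /andP[/set1P -> ]]|h] //.
by exists x; rewrite inE eqxx h.
Qed.

Lemma ball2I x y z : e x z -> e z y -> y \in ball e 2 x.
Proof.
move=> h1 h2; rewrite [ball _ 2 _]/= in_setU; apply/orP; right.
rewrite inE; apply/existsP; exists z; rewrite ball1E h1 h2 orbT //.
Qed.

Lemma ball12 x y : y \in ball e 1 x -> y \in ball e 2 x.
Proof. by move=> h; rewrite [ball _ 2 _]/= in_setU h. Qed.

Lemma card2 (x y : T) : x != y -> 1 < #|T|.
Proof.
move=> nxy; have := max_card (mem [:: x; y]).
by rewrite (card_uniqP _) //= inE nxy.
Qed.

Lemma dist_P x y : dist e x y < #|T| -> y \in ball e (dist e x y) x.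
Proof.
rewrite /dist => h.
have hs : has (fun k => y \in ball e k x) (iota 0 #|T|) by rewrite has_find size_iota.
have := nth_find 0 hs; rewrite nth_iota //.
Qed.

Lemma dist_le x y k : y \in ball e k x -> k < #|T| -> dist e x y <= k.
Proof.
move=> hy hk; rewrite leqNgt; apply/negP => hlt.
have := before_find 0 hlt; rewrite nth_iota // hy //.
Qed.

Lemma dist_pos x y : y != x -> 0 < dist e x y.
Proof.
move=> nyx; rewrite lt0n; apply/negP => /eqP h0.
have hT : 0 < #|T| by apply/card_gt0P; exists x.
have := dist_P (x:=x) (y:=y); rewrite h0 => /(_ hT).
by rewrite /= inE (negbTE nyx).
Qed.

Lemma dist_cls x y : simple_graph e -> dist e x y <= 2 ->
  dist e x y = (y != x) + ((y != x) && ~~ e x y).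
Proof.
move=> [se ie] hle; case: (eqVneq y x) => [->|nyx] /=.
  have hT : 0 < #|T| by apply/card_gt0P; exists x.
  by apply/eqP; rewrite -leqn0; apply: dist_le => //; rewrite /= inE.
have hT := card2 nyx.
have hp := dist_pos nyx.
case exy: (e x y) => /=.
  by apply/eqP; rewrite eqn_leq hp andbT; apply: dist_le; rewrite ?ball1E ?exy ?orbT.
case: (ltngtP (dist e x y) 1) => h.
- by lia.
- by lia.
- by have := dist_P (x:=x) (y:=y); rewrite h ball1E exy (negbTE nyx) => /(_ hT).
Qed.

Lemma sum_cls i (q : pred T) :
  \sum_j ((j != i) + ((j != i) && q j)) = #|T|.-1 + #|[pred j | (j != i) && q j]|.
Proof.
rewrite big_split /=; congr (_ + _).
  rewrite -(cardC1 i) -sum1_card [RHS]big_mkcond /=; apply: eq_bigr => j _; rewrite inE.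
  by case: (j != i).
rewrite -sum1_card [RHS]big_mkcond /=; apply: eq_bigr => j _; rewrite inE.
by case: (_ && _).
Qed.

End Aux.

Lemma curv_one (R : realType) (T : finType) (e : rel T) (u v : T) (K : T -> R) :
  (forall j, 2 <= dist e u j + dist e v j)%N -> curv_eq e K ->
  (forall j, 1 <= K j)%R -> forall j, K j = 1%R.
Proof.
move=> hc hK h1 j.
have hc' j' : (2 <= (dist e u j' + dist e v j')%:R :> R)%R.
  by rewrite (ler_nat R 2).
have hs : (\sum_j0 ((dist e u j0 + dist e v j0)%:R * K j0 - 2) = 0 :> R)%R.
  rewrite sumrB sumr_const.
  under eq_bigr => j0 _ do rewrite natrD mulrDl.
  rewrite big_split /= !hK -mulr_natl; lra.
have hn : forall i, true -> (0 <= (dist e u i + dist e v i)%:R * K i - 2 :> R)%R.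
  by move=> i _; have := hc' i; have := h1 i; nra.
have h := @psumr_eq0P _ _ _ _ hn hs j isT.
have := hc' j; have := h1 j; nra.
Qed.

Section CP.
Variable m : nat.
Hypothesis hm : (2 <= m)%N.

Let o0 : 'I_m := Ordinal (leq_trans (isT : 0 < 2) hm).
Let o1 : 'I_m := Ordinal (hm : 1 < m).

Lemma cp_simple : simple_graph (cp_rel m).
Proof. by split; [move=> x y; rewrite /cp_rel eq_sym | move=> x; rewrite /cp_rel eqxx]. Qed.

Lemma cp_mid (x y : 'I_m * bool) : x.1 = y.1 -> exists z, cp_rel m x z && cp_rel m z y.
Proof.
move=> hxy; exists (if x.1 == o0 then o1 else o0, false); rewrite /cp_rel /= -hxy.
by case: (eqVneq x.1 o0) => [->|h] //=; rewrite h /= eq_sym.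
Qed.

Lemma cp_card : #|{: 'I_m * bool}| = (m * 2)%N.
Proof. by rewrite card_prod card_ord card_bool. Qed.

Lemma cp_ball2 (x y : 'I_m * bool) : y \in ball (cp_rel m) 2 x.
Proof.
case: (eqVneq x.1 y.1) => h.
  by have [z /andP[h1 h2]] := cp_mid h; apply: ball2I h1 h2.
by apply: ball12; rewrite ball1E /cp_rel h orbT.
Qed.

Lemma cp_dle2 x y : dist (cp_rel m) x y <= 2.
Proof. by apply: dist_le; rewrite ?cp_ball2 // cp_card; lia. Qed.

Lemma cp_dist x y : dist (cp_rel m) x y = (y != x) + ((y != x) && ~~ cp_rel m x y).
Proof. exact: dist_cls cp_simple (cp_dle2 x y). Qed.

Let u : 'I_m * bool := (o0, false).
Let v : 'I_m * bool := (o0, true).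

Lemma cp_uv : dist (cp_rel m) u v = 2.
Proof. by rewrite cp_dist /cp_rel /=. Qed.
Lemma cp_vu : dist (cp_rel m) v u = 2.
Proof. by rewrite cp_dist /cp_rel /=. Qed.

Lemma cp_diam : diam (cp_rel m) = 2.
Proof.
apply/eqP; rewrite eqn_leq; apply/andP; split.
  by apply/bigmax_leqP => x _; apply/bigmax_leqP => y _; apply: cp_dle2.
rewrite -{1}cp_uv /diam.
apply: leq_trans; last exact: (leq_bigmax u).
exact: (leq_bigmax (F := fun y => dist (cp_rel m) u y) v).
Qed.

Lemma cp_rowsum i : (\sum_j dist (cp_rel m) i j = #|{: 'I_m * bool}|)%N.
Proof.
rewrite (eq_bigr _ (fun j _ => cp_dist i j)) sum_cls.
have -> : #|[pred j | (j != i) && ~~ cp_rel m i j]| = 1.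
  rewrite -(card1 (i.1, ~~ i.2)); apply: eq_card.
  case=> a b; case: i => c d; rewrite /cp_rel /= !inE !xpair_eqE negbK /=.
  rewrite [c == _]eq_sym.
  by case: (a =P c) => [hac|h] /=; case: b; case: d.
by rewrite cp_card; lia.
Qed.

Lemma cp_c j : (2 <= dist (cp_rel m) u j + dist (cp_rel m) v j)%N.
Proof.
case: (eqVneq j u) => [->|hu]; first by rewrite cp_vu addn2.
case: (eqVneq j v) => [->|hv]; first by rewrite cp_uv.
by have := dist_pos (cp_rel m) hu; have := dist_pos (cp_rel m) hv; lia.
Qed.

Lemma cp_sharp (R : realType) : bonnet_myers_sharp R (cp_rel m).
Proof.
have hK : curv_eq (cp_rel m) (fun _ => 1%R : R).
  move=> i; under eq_bigr => j _ do rewrite mulr1.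
  by rewrite -natr_sum cp_rowsum.
split; first by exists (fun _ => 1%R).
exists (fun _ => 1%R); split; [split => // K' hK' m1 m' [[i <-] _] [[i' hi'] hm']|].
  rewrite leNgt; apply/negP => hlt.
  have h1 : forall j, (1 <= K' j)%R by move=> j; apply: le_trans (ltW hlt) (hm' j).
  have := curv_one cp_c hK' h1 i'; rewrite hi' => h; move: hlt; rewrite h ltxx.
  by [].
rewrite cp_diam divff ?pnatr_eq0 //.
Qed.

Lemma cp_connected : connected_graph (cp_rel m).
Proof.
move=> x y; case: (eqVneq x.1 y.1) => h.
  have [z /andP[h1 h2]] := cp_mid h.
  exact: connect_trans (connect1 h1) (connect1 h2).
by apply: connect1; rewrite /cp_rel h.
Qed.

End CP.

Lemma forward (R : realType) (T : finType) (e : rel T) :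
  simple_graph e -> connected_graph e -> diam e = 2 -> bonnet_myers_sharp R e ->
  exists m : nat, 2 <= m /\ graph_iso e (cp_rel m).
Proof.
move=> hs hc hd [_ [K [[hK _] [_ hmin]]]].
have h1 : forall j, (1 <= K j)%R.
  by move=> j; move: (hmin j); rewrite hd divff // pnatr_eq0.
have dle x y : dist e x y <= 2.
  rewrite -hd /diam; apply: leq_trans; last exact: (leq_bigmax x).
  exact: (leq_bigmax (F := fun y => dist e x y) y).
have dcl x y := dist_cls hs (dle x y).
have [se ie] := hs.
have [u [v huv]] : exists u v, dist e u v = 2.
  case: (boolP [exists u, exists v, dist e u v == 2]) => [/existsP[u /existsP[v /eqP h]]|/existsPn hn].
    by exists u, v.
  exfalso; have : diam e <= 1; last by rewrite hd.
  apply/bigmax_leqP => x _; apply/bigmax_leqP => y _.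
  have := dle x y; move/existsPn: (hn x) => /(_ y) h; lia.
have nvu : v != u by apply/eqP => h; move: huv; rewrite h dcl eqxx.
have neuv : ~~ e u v by apply/negP => h; move: huv; rewrite dcl nvu h.
have hvu : dist e v u = 2 by rewrite dcl eq_sym nvu /= se (negbTE neuv).
have hc2 j : 2 <= dist e u j + dist e v j.
  case: (eqVneq j u) => [->|hu]; first by rewrite hvu addn2.
  case: (eqVneq j v) => [->|hv]; first by rewrite huv.
  by have := dist_pos e hu; have := dist_pos e hv; lia.
have K1 := curv_one hc2 hK h1.
have hrow i : \sum_j dist e i j = #|T|.
  apply/eqP; rewrite -(eqr_nat R) natr_sum; apply/eqP; rewrite -(hK i).
  by apply: eq_bigr => j _; rewrite K1 mulr1.
have hT : 0 < #|T| by apply/card_gt0P; exists u.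
have hN i : #|[pred j | (j != i) && ~~ e i j]| = 1.
  by have := hrow i; rewrite (eq_bigr _ (fun j _ => dcl i j)) sum_cls; lia.
pose sg i := odflt i [pick j | (j != i) && ~~ e i j].
have hsg i j : ((j != i) && ~~ e i j) = (j == sg i).
  move: (hN i) => /eqP /card1P [s hs'].
  have -> : sg i = s.
    rewrite /sg; case: pickP => [j' hj'|hn] /=.
      by move: (hs' j'); rewrite !inE /= hj' => /esym/eqP.
    by move: (hs' s); rewrite !inE /= hn eqxx.
  by move: (hs' j); rewrite !inE.
have echar x y : e x y = (y != x) && (y != sg x).
  have := hsg x y; case: (eqVneq y x) => [->|nyx]; first by rewrite ie.
  by rewrite /= => h; rewrite -[e x y]negbK h.
have sg_ne x : sg x != x by have := hsg x (sg x); rewrite eqxx => /andP[].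
have sg_ne_e x : ~~ e x (sg x) by have := hsg x (sg x); rewrite eqxx => /andP[].
have sgK : involutive sg.
  move=> x; apply/eqP; rewrite eq_sym -hsg eq_sym sg_ne /= se sg_ne_e //.
pose S := [set x | enum_rank x < enum_rank (sg x)].
have sgS x : x \in S -> sg x \notin S by rewrite !inE sgK; lia.
have notS x : x \notin S -> sg x \in S.
  rewrite !inE sgK -leqNgt => hle.
  have hne : (nat_of_ord (enum_rank (sg x)) != enum_rank x).
    by rewrite (inj_eq val_inj) (inj_eq enum_rank_inj) sg_ne.
  lia.
have hcardS : #|T| <= 2 * #|S|.
  rewrite -(cardsC S).
  have : #|~: S| <= #|S|.
    apply: leq_trans (leq_imset_card sg S).
    apply: subset_leq_card; apply/subsetP => y; rewrite inE => hy.
    by apply/imsetP; exists (sg y); [exact: notS | rewrite sgK].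
  lia.
pose g (p : 'I_#|S| * bool) := if p.2 then sg (enum_val p.1) else enum_val p.1.
have ginj : injective g.
  move=> [i b] [j c]; rewrite /g /=; case: b; case: c => h.
  - by move: h => /(can_inj sgK)/enum_val_inj ->.
  - by move: (sgS _ (enum_valP i)); rewrite h enum_valP.
  - by move: (sgS _ (enum_valP j)); rewrite -h enum_valP.
  - by move: h => /enum_val_inj ->.
have gbij : bijective g.
  apply: (inj_card_bij ginj); rewrite card_prod card_ord card_bool; lia.
have gsg p : sg (g p) = g (p.1, ~~ p.2) by case: p => i []; rewrite /g /= ?sgK.
have gedge a b : e (g a) (g b) = cp_rel _ a b.
  rewrite echar gsg !(inj_eq ginj).
  case: a => i x; case: b => j y; rewrite /cp_rel /= !xpair_eqE.
  by case: (j =P i) => [->|h] /=; [rewrite eqxx; case: x; case: y | rewrite eq_sym; apply/esym/eqP].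
have v_sg : v = sg u by apply/eqP; rewrite -hsg nvu neuv.
have h3 : 2 < #|T|.
  case/connectP: (hc u v) => p hp hl.
  case: p hp hl => [|z p] /=; first by move=> _ h; move: nvu; rewrite h eqxx.
  move=> /andP[euz _] _.
  have zu : z != u by apply/eqP => h; move: euz; rewrite h ie.
  have zv : z != v by apply/eqP => h; move: euz; rewrite h v_sg (negbTE (sg_ne_e u)).
  have := max_card (mem [:: u; v; z]).
  by rewrite (card_uniqP _) //= !inE negb_or eq_sym nvu eq_sym zu eq_sym zv.
exists #|S|; split; first by lia.
have [g' gK g'K] := gbij.
exists g'; split; first by exists g.
by move=> x y; rewrite -[in RHS](g'K x) -[in RHS](g'K y) gedge.
Qed.

Theorem mainTheorem10 (R : realType) :
  (forall (T : finType) (e : rel T),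
      simple_graph e -> connected_graph e -> diam e = 2 ->
      bonnet_myers_sharp R e ->
      exists m : nat, 2 <= m /\ graph_iso e (cp_rel m)) /\
  (forall m : nat, 2 <= m ->
      simple_graph (cp_rel m) /\ connected_graph (cp_rel m) /\
      diam (cp_rel m) = 2 /\ bonnet_myers_sharp R (cp_rel m)).
Proof.
split; first exact: forward.
move=> m hm; split; first exact: cp_simple.
split; first exact: cp_connected.
split; first exact: cp_diam.
exact: cp_sharp.
Qed.
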